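(* Given a quantum state $\rho$ and a list of observables $(X_{1},\dots,X_{d})$ on a finite dimensional Hilbert space $\mathcal{H}$, let $A$ and $J$ be the $d\times d$ nonnegative matrices whose $(i,j)$th entries are $A_{ij}=\mathrm{Tr}\,\sqrt{\rho}X_{j}\sqrt{\rho}X_{i}$ and $J_{ij}=\mathrm{Tr}\,\rho X_{j}X_{i}$. Then both $A$ and $J\#J^{\top}$ are real matrices and satisfy \[ A\leq J\#J^{\top}, \] where $\#$ denotes the operator geometric mean.
   Context: Here $\mathcal{H}$ is a finite dimensional complex Hilbert space, a quantum state is a density operator $\rho\ge 0$ with $\mathrm{Tr}\,\rho=1$, and observables are selfadjoint operators on $\mathcal{H}$. For positive semidefinite matrices $P,Q$, the operator geometric mean $P\#Q$ (Kubo–Ando) can be characterized as $P\#Q=\max\left\{ X\geq0 : \begin{pmatrix}P & X \\ X & Q \end{pmatrix} \geq 0 \right\}$. $J^{\top}$ denotes the transpose of $J$ (equivalently its complex conjugate, since $J$ is Hermitian). *)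

(* Defs.v *)
From HB Require Import structures.
From mathcomp Require Import all_boot all_order all_algebra.
From Stdlib Require Import ClassicalEpsilon.
Set Implicit Arguments. Unset Strict Implicit. Unset Printing Implicit Defensive.
Import Order.TTheory GRing.Theory Num.Theory.
Local Open Scope ring_scope.

Definition adjmx (C : numClosedFieldType) m n (A : 'M[C]_(m, n)) : 'M[C]_(n, m) :=
  map_mx Num.conj (A^T).

Definition herm_mx (C : numClosedFieldType) n (A : 'M[C]_n) : Prop :=
  adjmx A = A.

Definition psdmx (C : numClosedFieldType) n (A : 'M[C]_n) : Prop :=
  herm_mx A /\ forall v : 'cV[C]_n, 0 <= (adjmx v *m A *m v) 0 0.

Definition loewner_le (C : numClosedFieldType) n (A B : 'M[C]_n) : Prop :=
  psdmx (B - A).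

Definition density (C : numClosedFieldType) n (rho : 'M[C]_n) : Prop :=
  psdmx rho /\ \tr rho = 1.

Definition psd_sqrt (C : numClosedFieldType) n (A : 'M[C]_n) : 'M[C]_n :=
  epsilon (inhabits 0) (fun S : 'M[C]_n => psdmx S /\ S *m S = A).

(* Kubo-Ando geometric mean via the maximal characterization:
   P # Q = max { X >= 0 : [[P, X], [X, Q]] >= 0 } (Loewner order). *)
Definition gm_feasible (C : numClosedFieldType) n (P Q X : 'M[C]_n) : Prop :=
  psdmx X /\ psdmx (block_mx P X X Q).

Definition gmean (C : numClosedFieldType) n (P Q : 'M[C]_n) : 'M[C]_n :=
  epsilon (inhabits 0) (fun X : 'M[C]_n =>
    gm_feasible P Q X /\ forall Y, gm_feasible P Q Y -> loewner_le Y X).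

Definition real_mx (C : numClosedFieldType) m n (A : 'M[C]_(m, n)) : Prop :=
  forall i j, A i j \is Num.real.

(* Main.v *)
Require Import Defs.
From HB Require Import structures.
From mathcomp Require Import all_boot all_order all_algebra.
From mathcomp Require Import spectral sesquilinear ring.
From Stdlib Require Import ClassicalEpsilon.
Import Order.TTheory GRing.Theory Num.Theory.
Local Open Scope ring_scope.
Set Implicit Arguments. Unset Strict Implicit. Unset Printing Implicit Defensive.

Section Basic.
Variable C : numClosedFieldType.
Implicit Types (m n p : nat).

Lemma adjmxE m n (A : 'M[C]_(m,n)) i j : adjmx A i j = (A j i)^*.
Proof. by rewrite !mxE. Qed.

Lemma adjmxK m n (A : 'M[C]_(m,n)) : adjmx (adjmx A) = A.
Proof. by apply/matrixP=> i j; rewrite !mxE conjCK. Qed.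

Lemma adjmxM m n p (A : 'M[C]_(m,n)) (B : 'M[C]_(n,p)) :
  adjmx (A *m B) = adjmx B *m adjmx A.
Proof. by rewrite /adjmx trmx_mul map_mxM. Qed.

Lemma adjmxD m n (A B : 'M[C]_(m,n)) : adjmx (A + B) = adjmx A + adjmx B.
Proof. by apply/matrixP=> i j; rewrite !mxE rmorphD. Qed.

Lemma adjmxN m n (A : 'M[C]_(m,n)) : adjmx (- A) = - adjmx A.
Proof. by apply/matrixP=> i j; rewrite !mxE rmorphN. Qed.

Lemma adjmxB m n (A B : 'M[C]_(m,n)) : adjmx (A - B) = adjmx A - adjmx B.
Proof. by rewrite adjmxD adjmxN. Qed.

Lemma adjmx0 m n : adjmx (0 : 'M[C]_(m,n)) = 0.
Proof. by apply/matrixP=> i j; rewrite !mxE rmorph0. Qed.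

Lemma adjmxZ m n a (A : 'M[C]_(m,n)) : adjmx (a *: A) = a^* *: adjmx A.
Proof. by apply/matrixP=> i j; rewrite !mxE rmorphM. Qed.

Lemma adjmx1 n : adjmx (1%:M : 'M[C]_n) = 1%:M.
Proof. by rewrite /adjmx trmx1 map_mx1. Qed.

Lemma adjmx_block m1 m2 n1 n2 (A : 'M[C]_(m1,n1)) (B : 'M[C]_(m1,n2))
  (D : 'M[C]_(m2,n1)) (E : 'M[C]_(m2,n2)) :
  adjmx (block_mx A B D E) = block_mx (adjmx A) (adjmx D) (adjmx B) (adjmx E).
Proof. by rewrite /adjmx tr_block_mx map_block_mx. Qed.

Lemma adjmx_col m1 m2 n (A : 'M[C]_(m1,n)) (B : 'M[C]_(m2,n)) :
  adjmx (col_mx A B) = row_mx (adjmx A) (adjmx B).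
Proof. by rewrite /adjmx tr_col_mx map_row_mx. Qed.

Lemma adjmx_inv n (A : 'M[C]_n) : adjmx (invmx A) = invmx (adjmx A).
Proof. by rewrite /adjmx trmx_inv map_invmx. Qed.

Lemma adjmx_diag n (d : 'rV[C]_n) : adjmx (diag_mx d) = diag_mx (map_mx Num.conj d).
Proof. by rewrite /adjmx tr_diag_mx map_diag_mx. Qed.

Lemma herm_inv n (A : 'M[C]_n) : herm_mx A -> herm_mx (invmx A).
Proof. by rewrite /herm_mx adjmx_inv => ->. Qed.

Definition bf m n (M : 'M[C]_(m,n)) (u : 'cV[C]_m) (w : 'cV[C]_n) : C :=
  (adjmx u *m M *m w) 0 0.
Definition qf n (M : 'M[C]_n) u := bf M u u.

Lemma conj_mx11 (x : 'M[C]_1) : (x 0 0)^* = adjmx x 0 0.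
Proof. by rewrite !mxE. Qed.

Lemma bf_conj m n (M : 'M[C]_(m,n)) u w : (bf M u w)^* = bf (adjmx M) w u.
Proof. by rewrite /bf conj_mx11 !adjmxM adjmxK mulmxA. Qed.

Lemma bf_congr m n p q (M : 'M[C]_(m,n)) (B : 'M[C]_(m,p)) (D : 'M[C]_(n,q)) u w :
  bf (adjmx B *m M *m D) u w = bf M (B *m u) (D *m w).
Proof. by rewrite /bf adjmxM !mulmxA. Qed.

Lemma bfDl m n (M : 'M[C]_(m,n)) u1 u2 w : bf M (u1 + u2) w = bf M u1 w + bf M u2 w.
Proof. by rewrite /bf adjmxD !mulmxDl mxE. Qed.
Lemma bfDr m n (M : 'M[C]_(m,n)) u w1 w2 : bf M u (w1 + w2) = bf M u w1 + bf M u w2.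
Proof. by rewrite /bf !mulmxDr mxE. Qed.
Lemma bfNl m n (M : 'M[C]_(m,n)) u w : bf M (- u) w = - bf M u w.
Proof. by rewrite /bf adjmxN !mulNmx mxE. Qed.
Lemma bfNr m n (M : 'M[C]_(m,n)) u w : bf M u (- w) = - bf M u w.
Proof. by rewrite /bf mulmxN mxE. Qed.
Lemma bfZl m n (M : 'M[C]_(m,n)) a u w : bf M (a *: u) w = a^* * bf M u w.
Proof. by rewrite /bf adjmxZ -!scalemxAl mxE. Qed.
Lemma bfZr m n (M : 'M[C]_(m,n)) a u w : bf M u (a *: w) = a * bf M u w.
Proof. by rewrite /bf -scalemxAr mxE. Qed.
Lemma bfMD m n (M N : 'M[C]_(m,n)) u w : bf (M + N) u w = bf M u w + bf N u w.
Proof. by rewrite /bf mulmxDr mulmxDl mxE. Qed.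
Lemma bfMN m n (M : 'M[C]_(m,n)) u w : bf (- M) u w = - bf M u w.
Proof. by rewrite /bf mulmxN mulNmx mxE. Qed.
Lemma bfMB m n (M N : 'M[C]_(m,n)) u w : bf (M - N) u w = bf M u w - bf N u w.
Proof. by rewrite bfMD bfMN. Qed.
Lemma bf0 m n u w : bf (0 : 'M[C]_(m,n)) u w = 0.
Proof. by rewrite /bf mulmx0 mul0mx mxE. Qed.
Lemma bfM m n p (M : 'M[C]_(m,n)) (N : 'M[C]_(n,p)) u w :
  bf (M *m N) u w = bf M u (N *m w).
Proof. by rewrite /bf !mulmxA. Qed.
Lemma bf1 n (u w : 'cV[C]_n) : bf 1%:M u w = (adjmx u *m w) 0 0.
Proof. by rewrite /bf mulmx1. Qed.

Lemma bf_block m1 m2 n1 n2 (A : 'M[C]_(m1,n1)) (B : 'M[C]_(m1,n2))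
  (D : 'M[C]_(m2,n1)) (E : 'M[C]_(m2,n2)) x1 y1 x2 y2 :
  bf (block_mx A B D E) (col_mx x1 y1) (col_mx x2 y2) =
  bf A x1 x2 + bf B x1 y2 + bf D y1 x2 + bf E y1 y2.
Proof.
rewrite /bf adjmx_col mul_row_block mul_row_col.
have addE (X Y : 'M[C]_1) : (X + Y) 0 0 = X 0 0 + Y 0 0 by rewrite mxE.
rewrite !mulmxDl !addE; rewrite -!addrA; congr (_ + _); rewrite !addrA; congr (_ + _); exact: addrC.
Qed.


Lemma herm_adj n (M : 'M[C]_n) : herm_mx M -> adjmx M = M.
Proof. by []. Qed.

Lemma qf1_ge0 n (u : 'cV[C]_n) : 0 <= bf 1%:M u u.
Proof.
rewrite bf1 mxE; apply: sumr_ge0 => i _; rewrite !mxE mulrC; exact: mul_conjC_ge0.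
Qed.

Lemma tr_ge0 m n (Z : 'M[C]_(m,n)) : 0 <= \tr (Z *m adjmx Z).
Proof.
rewrite /mxtrace; apply: sumr_ge0 => i _; rewrite mxE.
apply: sumr_ge0 => j _; rewrite !mxE; exact: mul_conjC_ge0.
Qed.

Lemma psd_congr m n (M : 'M[C]_m) (B : 'M[C]_(m,n)) :
  psdmx M -> psdmx (adjmx B *m M *m B).
Proof.
case=> hM pM; split.
  by rewrite /herm_mx !adjmxM adjmxK hM mulmxA.
by move=> v; have := pM (B *m v); rewrite -/(bf _ _ _) -bf_congr.
Qed.

Lemma psd_herm n (M : 'M[C]_n) : psdmx M -> adjmx M = M.
Proof. by case. Qed.

Lemma psd_qf n (M : 'M[C]_n) v : psdmx M -> 0 <= bf M v v.
Proof. by case=> _ /(_ v). Qed.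

Lemma psdP n (M : 'M[C]_n) : adjmx M = M -> (forall v, 0 <= bf M v v) -> psdmx M.
Proof. by move=> h1 h2; split. Qed.

Lemma psd0 n : psdmx (0 : 'M[C]_n).
Proof. by apply: psdP => [|v]; rewrite ?adjmx0 ?bf0. Qed.

Lemma psd_block0 m1 m2 (D : 'M[C]_m2) :
  psdmx (block_mx (0 : 'M[C]_m1) 0 0 D) <-> psdmx D.
Proof.
split.
- case=> h p; apply: psdP.
    by move: h; rewrite /herm_mx adjmx_block => /eq_block_mx [].
  move=> v; have := p (col_mx 0 v).
  by rewrite -/(bf _ _ _) bf_block !bf0 !add0r.
- case=> h p; apply: psdP.
    by rewrite adjmx_block !adjmx0 h.
  move=> v; rewrite -[v]vsubmxK bf_block !bf0 !add0r; exact: p.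
Qed.

Lemma core0 (c z : C) : (forall t, 0 <= c + t^* * z + t * z^*) -> z = 0.
Proof.
move=> h; apply/eqP; apply/negPn/negP => nz.
have c0 : 0 <= c by have := h 0; rewrite rmorph0 !mul0r !addr0.
have cr : c^* = c by apply/CrealP; exact: ger0_real.
have nzc : z^* != 0 by rewrite conjC_eq0.
have := h (- (c + 1) / (2 * z^*)).
have ct : (- (c + 1) / (2 * z^*))^* = - (c + 1) / (2 * z).
  by rewrite fmorph_div rmorphN rmorphD rmorphM rmorph1 rmorph_nat /= conjCK cr.
rewrite ct.
have -> : c + (- (c + 1) * (2 * z)^-1) * z + (- (c + 1) / (2 * z^*)) * z^* = -1.
  by field; rewrite /= conjC_eq0 nz.
by move=> H; have := le_lt_trans H (ltrN10 _); rewrite ltxx.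
Qed.

Lemma schur1 (c be K : C) : 0 <= c -> (c = 0 -> be = 0) ->
  (forall b, 0 <= K + c * (b^* * b) + b^* * be + b * be^*) <->
  0 <= K - be^* * be / c.
Proof.
move=> c0 hc; have [c00|nc] := eqVneq c 0.
  rewrite c00 hc // conjC0 !(mul0r, mulr0, addr0, subr0).
  by split => [/(_ 0)|h b]; rewrite !(mul0r, mulr0, addr0).
have cr : c^* = c by apply/CrealP; exact: ger0_real.
split.
- move=> /(_ (- be / c)).
  have -> : (- be / c)^* = - be^* / c by rewrite fmorph_div rmorphN /= cr.
  have -> : K + c * (- be^* / c * (- be / c)) + - be^* / c * be + - be / c * be^* =
     K - be^* * be / c by field.
  done.
- move=> h b.
  have -> : K + c * (b^* * b) + b^* * be + b * be^* =
     (K - be^* * be / c) + c * ((b + be / c)^* * (b + be / c)).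
    by rewrite rmorphD fmorph_div /= cr; field.
  apply: addr_ge0 => //; apply: mulr_ge0 => //; rewrite mulrC; exact: mul_conjC_ge0.
Qed.

Definition Phi n (P Q X : 'M[C]_n) u w := bf P u u + bf X u w + bf X w u + bf Q w w.

Lemma feasE n (P Q X : 'M[C]_n) : adjmx P = P -> adjmx Q = Q ->
  gm_feasible P Q X <-> psdmx X /\ forall u w, 0 <= Phi P Q X u w.
Proof.
move=> hP hQ; split.
- case=> pX [_ pB]; split => // u w.
  by have := pB (col_mx u w); rewrite -/(bf _ _ _) bf_block.
- case=> pX h; split => //; apply: psdP.
    by rewrite adjmx_block hP hQ psd_herm.
  by move=> v; rewrite -[v]vsubmxK bf_block; apply: h.
Qed.

Definition cg m n (B : 'M[C]_(m,n)) (M : 'M[C]_n) := B *m M *m adjmx B.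

Lemma cg_herm m n (B : 'M[C]_(m,n)) M : adjmx M = M -> adjmx (cg B M) = cg B M.
Proof. by move=> h; rewrite /cg !adjmxM adjmxK h mulmxA. Qed.

Lemma psd_cg m n (B : 'M[C]_(m,n)) M : psdmx M -> psdmx (cg B M).
Proof. by move=> /(psd_congr (adjmx B)); rewrite adjmxK. Qed.

Lemma cgB m n (B : 'M[C]_(m,n)) M N : cg B (M - N) = cg B M - cg B N.
Proof. by rewrite /cg mulmxBr mulmxBl. Qed.

Lemma cgM m n p (B : 'M[C]_(m,n)) (D : 'M[C]_(n,p)) M : cg B (cg D M) = cg (B *m D) M.
Proof. by rewrite /cg adjmxM !mulmxA. Qed.

Lemma cg1 n (M : 'M[C]_n) : cg 1%:M M = M.
Proof. by rewrite /cg adjmx1 mul1mx mulmx1. Qed.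

Lemma loewner_cg m n (B : 'M[C]_(m,n)) M N : loewner_le M N -> loewner_le (cg B M) (cg B N).
Proof. by rewrite /loewner_le -cgB; apply: psd_cg. Qed.

Lemma Phi_cg m n (B : 'M[C]_(m,n)) P Q X u w :
  Phi (cg B P) (cg B Q) (cg B X) u w = Phi P Q X (adjmx B *m u) (adjmx B *m w).
Proof.
by rewrite /Phi /cg -{1 3 5 7}[B]adjmxK !bf_congr.
Qed.

Lemma feas_cg m n (B : 'M[C]_(m,n)) P Q X : adjmx P = P -> adjmx Q = Q ->
  gm_feasible P Q X -> gm_feasible (cg B P) (cg B Q) (cg B X).
Proof.
move=> hP hQ /feasE [] // pX h; apply/feasE; rewrite ?cg_herm //.
by split; [exact: psd_cg | move=> u w; rewrite Phi_cg].
Qed.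

Definition ismax n (P Q G : 'M[C]_n) :=
  gm_feasible P Q G /\ forall Y, gm_feasible P Q Y -> loewner_le Y G.

Lemma adj_unit n (B : 'M[C]_n) : B \in unitmx -> adjmx B \in unitmx.
Proof. by move=> u; rewrite /adjmx map_unitmx unitmx_tr. Qed.

Lemma cgVK n (B : 'M[C]_n) M : B \in unitmx -> cg (invmx B) (cg B M) = M.
Proof.
move=> u; by rewrite cgM mulVmx // cg1.
Qed.

Lemma max_cg n (B : 'M[C]_n) P Q : B \in unitmx -> adjmx P = P -> adjmx Q = Q ->
  (exists G, ismax (cg B P) (cg B Q) G) -> exists G, ismax P Q G.
Proof.
move=> u hP hQ [G [fG mG]]; exists (cg (invmx B) G); split.
  by rewrite -(cgVK P u) -(cgVK Q u); apply: feas_cg => //; apply: cg_herm.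
move=> Y fY; rewrite -(cgVK Y u); apply: loewner_cg; apply: mG.
exact: feas_cg.
Qed.

Lemma spec_herm n (H : 'M[C]_n) : adjmx H = H ->
  exists U : 'M[C]_n, exists h : 'rV[C]_n,
  [/\ U *m adjmx U = 1%:M, adjmx U *m U = 1%:M, forall i, h 0 i \is Num.real
     & H = adjmx U *m diag_mx h *m U].
Proof.
move=> hH.
have hs : H \is hermsymmx by apply/is_hermitianmxP; rewrite expr0 scale1r; exact: esym hH.
have /orthomx_spectralP eH := hermitian_normalmx hs.
have uU := spectral_unitarymx H.
exists (spectralmx H), (spectral_diag H); split.
- exact/unitarymxP.
- by rewrite -[adjmx _](invmx_unitary uU) mulVmx // unitarymx_unit.
- by move=> i; have /mxOverP := hermitian_spectral_diag_real hs; apply.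
- by rewrite [LHS]eH invmx_unitary.
Qed.

Lemma bf_diag n (h : 'rV[C]_n) x :
  bf (diag_mx h) x x = \sum_i h 0 i * ((x i 0)^* * x i 0).
Proof.
rewrite /bf mul_mx_diag mxE; apply: eq_bigr => i _; rewrite !mxE.
by rewrite mulrCA mulrA.
Qed.

Lemma bf_delta m n (M : 'M[C]_(m,n)) i j : bf M (delta_mx i 0) (delta_mx j 0) = M i j.
Proof.
rewrite /bf /adjmx trmx_delta map_delta_mx ?rmorph1 ?rmorph0 //.
by rewrite -rowE -colE !mxE.
Qed.

Lemma psd_diag n (h : 'rV[C]_n) : (forall i, 0 <= h 0 i) -> psdmx (diag_mx h).
Proof.
move=> hp; apply: psdP => [|v].
  rewrite adjmx_diag; congr diag_mx; apply/rowP => i; rewrite !mxE.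
  by apply/CrealP; exact: ger0_real.
rewrite bf_diag; apply: sumr_ge0 => i _; apply: mulr_ge0 => //.
rewrite mulrC; exact: mul_conjC_ge0.
Qed.

Lemma spec_psd n (M : 'M[C]_n) : psdmx M ->
  exists U : 'M[C]_n, exists h : 'rV[C]_n,
  [/\ U *m adjmx U = 1%:M, adjmx U *m U = 1%:M, forall i, 0 <= h 0 i
     & M = adjmx U *m diag_mx h *m U].
Proof.
move=> pM; have [U [h [u1 u2 hr eM]]] := spec_herm (psd_herm pM).
exists U, h; split => // i.
have := psd_qf (adjmx U *m delta_mx i 0) pM.
by rewrite [in bf M]eM bf_congr mulmxA u1 mul1mx bf_delta mxE eqxx mulr1n.
Qed.

Lemma sqrt_exists n (M : 'M[C]_n) : psdmx M ->
  exists S, psdmx S /\ S *m S = M.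
Proof.
move=> pM; have [U [h [u1 u2 hp eM]]] := spec_psd pM.
exists (adjmx U *m diag_mx (map_mx sqrtC h) *m U); split.
  apply: psd_congr; apply: psd_diag => i.
  by rewrite mxE sqrtC_ge0.
set D := diag_mx (map_mx sqrtC h).
have -> : adjmx U *m D *m U *m (adjmx U *m D *m U) = adjmx U *m (D *m D) *m U.
  by rewrite !mulmxA -(mulmxA _ U) u1 mulmx1.
rewrite eM mulmx_diag; congr (_ *m diag_mx _ *m _).
by apply/rowP => i; rewrite !mxE -expr2 sqrtCK.
Qed.

Lemma bfMl m n p (M : 'M[C]_(m,n)) (B : 'M[C]_(m,p)) u w :
  bf M (B *m u) w = bf (adjmx B *m M) u w.
Proof. by rewrite /bf adjmxM !mulmxA. Qed.

Lemma bfMr m n p (M : 'M[C]_(m,n)) (D : 'M[C]_(n,p)) u w :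
  bf M u (D *m w) = bf (M *m D) u w.
Proof. by rewrite bfM. Qed.

Lemma diag_mxN n (h : 'rV[C]_n) : diag_mx (- h) = - diag_mx h.
Proof. by apply/matrixP => i j; rewrite !mxE mulNrn. Qed.

Lemma max_one n (M : 'M[C]_n) : psdmx M -> exists G, ismax 1%:M M G.
Proof.
move=> pM; have [S [pS eS]] := sqrt_exists pM.
have hS := psd_herm pS; have hM := psd_herm pM.
exists S; split.
  apply/feasE; rewrite ?adjmx1 //; split => // u w.
  have -> : Phi 1%:M M S u w = bf 1%:M (u + S *m w) (u + S *m w).
    rewrite /Phi !bfDl !bfDr (bfMr 1%:M S u w) (bfMl _ S w u) (bfMl _ S w (S *m w)).
    by rewrite (bfMr _ S w w) hS mul1mx !mulmx1 eS !addrA.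
  exact: qf1_ge0.
move=> Y /feasE [] //; rewrite ?adjmx1 // => pY hY.
have hY' := psd_herm pY.
have key w : 0 <= bf M w w - bf (Y *m Y) w w.
  have := hY (- (Y *m w)) w.
  by rewrite /Phi !bfNl !bfNr opprK !bfMl !bfMr hY' mulmx1 subrr sub0r addrC.
have hH : adjmx (Y - S) = Y - S by rewrite adjmxB hY' hS.
have [U [h [u1 u2 hr eH]]] := spec_herm hH.
rewrite /loewner_le.
have [allneg|] := boolP [forall i, h 0 i <= 0].
  have -> : S - Y = adjmx U *m diag_mx (- h) *m U.
    by rewrite diag_mxN mulmxN mulNmx -eH opprB.
  apply: psd_congr; apply: psd_diag => i; rewrite mxE oppr_ge0; exact: (forallP allneg i).
rewrite negb_forall => /existsP [i hi].
have lpos : 0 < h 0 i by rewrite real_ltNge ?real0 ?hr.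
set l := h 0 i in lpos; pose v : 'cV[C]_n := adjmx U *m delta_mx i 0.
have Hv : (Y - S) *m v = l *: v.
  rewrite eH /v -!mulmxA (mulmxA U) u1 mul1mx scalemxAr; congr (_ *m _).
  rewrite mul_diag_mx; apply/matrixP => a b; rewrite !mxE.
  by case: (eqVneq a i) => [->|] //=; rewrite !mulr0n !mulr0.
have Yv : Y *m v = S *m v + l *: v by rewrite -Hv mulmxBl addrC subrK.
have v1 : bf 1%:M v v = 1 by rewrite /v bfMl bfMr adjmxK mulmx1 u1 bf_delta mxE eqxx.
have s0 : 0 <= bf S v v := psd_qf v pS.
have lr : l^* = l by apply/CrealP; exact: hr.
have := key v.
have -> : bf (Y *m Y) v v = bf 1%:M (Y *m v) (Y *m v) by rewrite bfMl bfMr hY' mulmx1.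
rewrite Yv !bfDl !bfDr !bfZl !bfZr v1 lr.
rewrite (bfMl _ S v (S *m v)) (bfMr _ S v v) (bfMl _ S v v) (bfMr _ S v v) hS mul1mx mulmx1 eS.
set m := bf M v v; set s := bf S v v.
have -> : m - (m + l * s + (l * s + l * (l * 1))) = - (l * s + l * s + l * l) by ring.
rewrite oppr_ge0 => H.
have : 0 < l * s + l * s + l * l.
  apply: ltr_wpDl; first by apply: addr_ge0; apply: mulr_ge0 => //; exact: ltW.
  exact: mulr_gt0.
by move=> /lt_le_trans /(_ H); rewrite ltxx.
Qed.

Lemma max_unit n (P Q : 'M[C]_n) : P \in unitmx -> psdmx P -> psdmx Q ->
  exists G, ismax P Q G.
Proof.
move=> uP pP pQ; have [S [pS eS]] := sqrt_exists pP.
have uS : S \in unitmx by move: uP; rewrite -eS unitmx_mul => /andP[].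
have hS := psd_herm pS.
apply: (@max_cg _ (invmx S)); rewrite ?unitmx_inv ?psd_herm //.
have -> : cg (invmx S) P = 1%:M.
  by rewrite /cg adjmx_inv hS -eS mulmxA mulVmx // mul1mx mulmxV.
exact/max_one/psd_cg.
Qed.

Lemma bf_deltal m n (M : 'M[C]_(m,n)) i w : bf M (delta_mx i 0) w = (M *m w) i 0.
Proof.
rewrite /bf /adjmx trmx_delta map_delta_mx ?rmorph1 ?rmorph0 //.
by rewrite -mulmxA -rowE !mxE.
Qed.

Lemma bf_cV1l n (M : 'M[C]_(1,n)) (b : 'cV[C]_1) w : bf M b w = (b 0 0)^* * (M *m w) 0 0.
Proof. by rewrite /bf -mulmxA mxE big_ord1 !mxE. Qed.

Lemma bf_scal1 (c : C) (b : 'cV[C]_1) : bf (c%:M) b b = c * ((b 0 0)^* * b 0 0).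
Proof. by rewrite bf_cV1l mul_scalar_mx mxE mulrCA. Qed.

Lemma ord1_0 (a : 'I_1) : a = 0.
Proof. exact: ord1. Qed.

Lemma lshift0 m (a : 'I_1) : lshift m a = ord0 :> 'I_(1 + m).
Proof. by apply: val_inj; rewrite /= (ord1 a). Qed.

Lemma row0 m (M Y N : 'M[C]_(1 + m)) : adjmx Y = Y ->
  (forall u w, 0 <= bf M u u + bf Y u w + bf Y w u + bf N w w) ->
  M ord0 ord0 = 0 -> forall w : 'cV[C]_(1 + m), (Y *m w) ord0 0 = 0.
Proof.
move=> hY h M0 w; apply: (core0 (c := bf N w w)) => t.
have := h (t *: delta_mx ord0 0) w.
rewrite !bfZl !bfZr bf_delta M0 mulr0 mulr0 add0r bf_deltal.
have -> : bf Y w (delta_mx ord0 0) = ((Y *m w) ord0 0)^*.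
  by rewrite -bf_deltal bf_conj hY.
by rewrite addrC addrA.
Qed.

Lemma zero_row m (Y : 'M[C]_(1 + m)) : adjmx Y = Y ->
  (forall w : 'cV[C]_(1 + m), (Y *m w) ord0 0 = 0) -> Y = block_mx 0 0 0 (drsubmx Y).
Proof.
move=> hY h.
have r0 j : Y ord0 j = 0 by have := h (delta_mx j 0); rewrite -colE !mxE.
have c0 i : Y i ord0 = 0.
  by rewrite -hY !mxE r0 conjC0.
rewrite -{1}[Y]submxK; congr block_mx; apply/matrixP => a b; rewrite !mxE ?lshift0 //.
Qed.

Section Reduce.
Variables (m : nat) (P Q : 'M[C]_(1 + m)).
Hypotheses (pP : psdmx P) (pQ : psdmx Q) (P0 : P ord0 ord0 = 0).

Let P' := drsubmx P.
Let c := Q ord0 ord0.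
Let Qb := ursubmx Q.
Let Qc := dlsubmx Q.
Let Qd := drsubmx Q.
Definition Qred := Qd - Qc *m (c^-1 *: Qb).

Lemma psd_row0 n' (M : 'M[C]_(1 + n')) : psdmx M -> M ord0 ord0 = 0 ->
  M = block_mx 0 0 0 (drsubmx M).
Proof.
move=> pM M0; apply: zero_row; first exact: psd_herm pM.
apply: (row0 (M := M) (N := M) (psd_herm pM)) M0 => u w.
by have := psd_qf (u + w) pM; rewrite !bfDl !bfDr !addrA.
Qed.

Lemma eP : P = block_mx 0 0 0 P'.
Proof. exact: psd_row0. Qed.

Lemma ulQ : ulsubmx Q = c%:M.
Proof. by rewrite [LHS]mx11_scalar !mxE lshift0. Qed.

Lemma eQ : Q = block_mx c%:M Qb Qc Qd.
Proof. by rewrite -ulQ submxK. Qed.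

Lemma hQ : adjmx Qc = Qb /\ adjmx Qd = Qd.
Proof.
have := psd_herm pQ; rewrite {1}eQ adjmx_block.
rewrite {1}eQ => /eq_block_mx [_ h1 _ h2]; split; [exact: h1 | exact: h2].
Qed.

Lemma c_ge0 : 0 <= c.
Proof.
by have := psd_qf (delta_mx ord0 0) pQ; rewrite bf_delta.
Qed.

Lemma c0_Qb : c = 0 -> Qb = 0.
Proof.
move=> c0; have eQ0 := psd_row0 pQ c0.
by rewrite /Qb eQ0 block_mxKur.
Qed.

Lemma P'psd : psdmx P'.
Proof. by apply/(psd_block0 1); rewrite -eP. Qed.

Lemma bfQ (b : 'cV[C]_1) w :
  bf Q (col_mx b w) (col_mx b w) =
  bf Qd w w + c * ((b 0 0)^* * b 0 0) + (b 0 0)^* * (Qb *m w) 0 0 +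
  b 0 0 * ((Qb *m w) 0 0)^*.
Proof.
rewrite {1}eQ bf_block bf_scal1 bf_cV1l.
have -> : bf Qc w b = b 0 0 * ((Qb *m w) 0 0)^*.
  by rewrite -[Qc in LHS]adjmxK -bf_conj (proj1 hQ) bf_cV1l rmorphM /= conjCK.
by rewrite addrC !addrA.
Qed.

Lemma bfQred w :
  bf Qred w w = bf Qd w w - ((Qb *m w) 0 0)^* * ((Qb *m w) 0 0) / c.
Proof.
rewrite /Qred bfMB bfM; congr (_ - _).
rewrite -[Qc in LHS]adjmxK -bf_conj (proj1 hQ) bf_cV1l rmorphM /= conjCK -scalemxAl mxE.
by rewrite mulrC [X in X^*]mxE; ring.
Qed.

Lemma beta0 (w : 'cV[C]_m) : c = 0 -> (Qb *m w) 0 0 = 0.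
Proof. by move=> /c0_Qb ->; rewrite mul0mx mxE. Qed.

Lemma scal11 (b : C) : (b%:M : 'cV[C]_1) 0 0 = b.
Proof. by rewrite mxE eqxx mulr1n. Qed.

Lemma Qred_psd : psdmx Qred.
Proof.
have [h1 h2] := hQ.
have cr : c^* = c by apply/CrealP; exact: ger0_real c_ge0.
apply: psdP => [|w].
  have ci : c^-1^* = c^-1 by rewrite fmorphV /= cr.
  rewrite /Qred adjmxB h2 adjmxM adjmxZ -h1 adjmxK ci.
  by rewrite -scalemxAl scalemxAr.
rewrite bfQred; apply: (schur1 _ c_ge0 (beta0 w)).1 => b.
have := psd_qf (col_mx b%:M w) pQ; rewrite bfQ scal11.
by rewrite addrC !addrA.
Qed.

Lemma PhiE (Y' : 'M[C]_m) a u b w :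
  Phi P Q (block_mx 0 0 0 Y') (col_mx a u) (col_mx b w) =
  (bf P' u u + bf Y' u w + bf Y' w u + bf Qd w w) + c * ((b 0 0)^* * b 0 0) +
  (b 0 0)^* * (Qb *m w) 0 0 + b 0 0 * ((Qb *m w) 0 0)^*.
Proof.
rewrite /Phi eP !bf_block !bf0 !add0r bfQ.
set x1 := bf P' u u; set x2 := bf Y' u w; set x3 := bf Y' w u; set x4 := bf Qd w w.
ring.
Qed.

Lemma PhiE' (Y' : 'M[C]_m) u w :
  Phi P' Qred Y' u w =
  (bf P' u u + bf Y' u w + bf Y' w u + bf Qd w w) - ((Qb *m w) 0 0)^* * ((Qb *m w) 0 0) / c.
Proof. by rewrite /Phi bfQred !addrA. Qed.

Lemma feas_red (Y' : 'M[C]_m) :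
  gm_feasible P Q (block_mx 0 0 0 Y') <-> gm_feasible P' Qred Y'.
Proof.
rewrite (feasE _ (psd_herm pP) (psd_herm pQ)).
rewrite (feasE _ (psd_herm P'psd) (psd_herm Qred_psd)) (psd_block0 1).
split => -[pY h]; split => // u w.
  rewrite PhiE'; apply: (schur1 _ c_ge0 (beta0 w)).1 => b.
  by have := h (col_mx 0 u) (col_mx b%:M w); rewrite PhiE scal11.
rewrite -[u]vsubmxK -[w]vsubmxK PhiE; apply: (schur1 _ c_ge0 (beta0 _)).2.
by rewrite -PhiE'.
Qed.


Lemma feas_shape Y : gm_feasible P Q Y -> Y = block_mx 0 0 0 (drsubmx Y).
Proof.
move=> /(feasE _ (psd_herm pP) (psd_herm pQ)) [pY h].
apply: zero_row; first exact: psd_herm pY.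
exact: (row0 (M := P) (N := Q) (psd_herm pY) h P0).
Qed.

Lemma reduce_max : (exists G', ismax P' Qred G') -> exists G, ismax P Q G.
Proof.
move=> [G' [fG mG]]; exists (block_mx 0 0 0 G'); split.
  exact/feas_red.
move=> Y fY; have eY := feas_shape fY; rewrite eY; move: fY; rewrite eY.
move=> /feas_red /mG; rewrite /loewner_le opp_block_mx add_block_mx !subr0.
by rewrite block_mxKdr (psd_block0 1).
Qed.
End Reduce.

Lemma singular_cg m (P : 'M[C]_m.+1) : psdmx P -> ~~ (P \in unitmx) ->
  exists W : 'M[C]_m.+1, W \in unitmx /\ (cg W P) ord0 ord0 = 0.
Proof.
move=> pP nuP; have [U [h [u1 u2 hp eP]]] := spec_psd pP.
have uU : U \in unitmx by case: (mulmx1_unit u1).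
have [allnz|] := boolP [forall i, h 0 i != 0].
  exfalso; move: nuP; rewrite eP !unitmx_mul uU adj_unit // andbT /=.
  rewrite unitmxE det_diag unitfE prodf_seq_neq0; apply/negP/negPn.
  by apply/allP => i _; exact: (forallP allnz i).
rewrite negb_forall => /existsP [i /negPn /eqP hi].
exists (tperm_mx ord0 i *m U); split.
  by rewrite unitmx_mul uU andbT unitmx_perm.
rewrite -cgM /cg [in X in X *m _]eP.
have -> : U *m (adjmx U *m diag_mx h *m U) *m adjmx U = diag_mx h.
  by rewrite !mulmxA u1 mul1mx -mulmxA u1 mulmx1.
have -> : adjmx (tperm_mx ord0 i) = tperm_mx ord0 i :> 'M[C]_m.+1.
  by rewrite /adjmx tr_tperm_mx map_tperm_mx.
by rewrite -xcolE -xrowE /xcol /xrow !mxE eqxx mulr1n perm.tpermL.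
Qed.

Theorem gm_exists n (P Q : 'M[C]_n) : psdmx P -> psdmx Q -> exists G, ismax P Q G.
Proof.
elim: n P Q => [|m IH] P Q pP pQ.
  by apply: max_unit => //; rewrite unitmxE det_mx00 unitr1.
case uP: (P \in unitmx); first by apply: max_unit.
have [W [uW W0]] := singular_cg pP (negbT uP).
apply: (max_cg uW (psd_herm pP) (psd_herm pQ)).
apply: (reduce_max (psd_cg W pP) (psd_cg W pQ) W0).
apply: IH; [exact: P'psd (psd_cg W pP) W0 | exact: Qred_psd (psd_cg W pQ)].
Qed.

Lemma conj_tr n (A : 'M[C]_n) : (\tr A)^* = \tr (adjmx A).
Proof. by rewrite /adjmx trace_map_mx mxtrace_tr. Qed.

Lemma tr_sum n I (r : seq I) (Pr : pred I) (F : I -> 'M[C]_n) :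
  \tr (\sum_(i <- r | Pr i) F i) = \sum_(i <- r | Pr i) \tr (F i).
Proof. by apply: (big_morph _ (@mxtraceD _ _) (@mxtrace0 _ _)). Qed.

Lemma adjmx_sum m n I (r : seq I) (Pr : pred I) (F : I -> 'M[C]_(m,n)) :
  adjmx (\sum_(i <- r | Pr i) F i) = \sum_(i <- r | Pr i) adjmx (F i).
Proof. by apply: (big_morph _ (@adjmxD _ _) (@adjmx0 _ _)). Qed.

Section Traces.
Variables (n d : nat) (X : 'I_d -> 'M[C]_n).
Hypothesis hX : forall k, adjmx (X k) = X k.

Definition Yv (u : 'cV[C]_d) := \sum_j u j 0 *: X j.
Definition KK (L M : 'M[C]_n) := \matrix_(i < d, j < d) \tr (L *m X j *m M *m X i).

Lemma adj_Yv u : adjmx (Yv u) = \sum_i (u i 0)^* *: X i.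
Proof. by rewrite adjmx_sum; apply: eq_bigr => i _; rewrite adjmxZ hX. Qed.

Lemma bfK L M u w : bf (KK L M) u w = \tr (L *m Yv w *m M *m adjmx (Yv u)).
Proof.
rewrite adj_Yv /Yv /bf mxE.
under eq_bigr => j _ do rewrite mxE mulr_suml.
rewrite exchange_big /= mulmx_sumr tr_sum.
apply: eq_bigr => i _; rewrite mulmx_sumr !mulmx_suml tr_sum; apply: eq_bigr => j _.
rewrite !mxE -!(scalemxAr, scalemxAl) !mxtraceZ.
by rewrite mulrA mulrAC.
Qed.

Lemma KK_herm L M : adjmx L = L -> adjmx M = M -> adjmx (KK L M) = KK L M.
Proof.
move=> hL hM; apply/matrixP => i j; rewrite !mxE conj_tr !adjmxM hL hM !hX.
by rewrite !mulmxA mxtrace_mulC !mulmxA.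
Qed.


Lemma trC3 (A B : 'M[C]_n) : \tr (A *m B) = \tr (B *m A).
Proof. exact: mxtrace_mulC. Qed.

Lemma J_psd S : psdmx S -> psdmx (KK (S *m S) 1%:M).
Proof.
move=> pS; have hS := psd_herm pS; apply: psdP.
  by apply: KK_herm; rewrite ?adjmx1 // adjmxM hS.
move=> u; rewrite bfK mulmx1.
have := tr_ge0 (S *m Yv u); rewrite adjmxM hS.
by rewrite !mulmxA trC3 !mulmxA.
Qed.

Lemma JT_psd S : psdmx S -> psdmx (KK 1%:M (S *m S)).
Proof.
move=> pS; have hS := psd_herm pS; apply: psdP.
  by apply: KK_herm; rewrite ?adjmx1 // adjmxM hS.
move=> u; rewrite bfK mul1mx.
have := tr_ge0 (Yv u *m S); rewrite adjmxM hS.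
by rewrite !mulmxA.
Qed.

Lemma A_psd S : psdmx S -> psdmx (KK S S).
Proof.
move=> pS; have hS := psd_herm pS; apply: psdP; first exact: KK_herm.
have [R [pR eR]] := sqrt_exists pS; have hR := psd_herm pR.
move=> u; rewrite bfK -eR.
have := tr_ge0 (R *m Yv u *m R); rewrite !adjmxM hR.
by rewrite !mulmxA trC3 !mulmxA.
Qed.

Lemma A_feas S : psdmx S ->
  gm_feasible (KK (S *m S) 1%:M) (KK 1%:M (S *m S)) (KK S S).
Proof.
move=> pS; have hS := psd_herm pS.
apply/feasE; rewrite ?KK_herm ?adjmx1 ?adjmxM ?hS //.
split; first exact: A_psd.
move=> u w; rewrite /Phi !bfK mulmx1 mul1mx.
have := tr_ge0 (S *m Yv u + Yv w *m S).
rewrite adjmxD !adjmxM hS !mulmxDl !mulmxDr !mxtraceD.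
have e1 : \tr (S *m Yv u *m (adjmx (Yv u) *m S)) = \tr (S *m S *m Yv u *m adjmx (Yv u)).
  by rewrite !mulmxA [in LHS]trC3 !mulmxA.
have e2 : \tr (Yv w *m S *m (adjmx (Yv u) *m S)) = \tr (S *m Yv w *m S *m adjmx (Yv u)).
  by rewrite !mulmxA [in LHS]trC3 !mulmxA.
rewrite e1 e2 !mulmxA.
by rewrite addrA (addrAC (\tr (S *m S *m Yv u *m adjmx (Yv u)))).
Qed.

Lemma A_real S : adjmx S = S -> forall i j, (KK S S) i j \is Num.real.
Proof.
move=> hS i j; apply/CrealP; rewrite mxE conj_tr !adjmxM hS !hX.
by rewrite !mulmxA [LHS]trC3 !mulmxA -[in LHS]mulmxA [LHS]trC3 !mulmxA.
Qed.
End Traces.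

Lemma psd_antisym n (M : 'M[C]_n) : psdmx M -> psdmx (- M) -> M = 0.
Proof.
move=> pM pN; have [U [h [u1 u2 hp eM]]] := spec_psd pM.
have hi i : bf M (adjmx U *m delta_mx i 0) (adjmx U *m delta_mx i 0) = h 0 i.
  by rewrite [in bf M]eM bf_congr mulmxA u1 mul1mx bf_delta mxE eqxx mulr1n.
have h0 : h = 0.
  apply/rowP => i; rewrite mxE; apply/eqP; rewrite eq_le hp andbT.
  by have := psd_qf (adjmx U *m delta_mx i 0) pN; rewrite bfMN hi oppr_ge0.
rewrite eM h0; apply/matrixP => i j; rewrite !mxE big1 // => k _; rewrite !mxE big1 ?mul0r // => l _.
by rewrite !mxE mul0rn mulr0.
Qed.

Definition cj m n (A : 'M[C]_(m,n)) := map_mx Num.conj A.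

Lemma cjK m n (A : 'M[C]_(m,n)) : cj (cj A) = A.
Proof. by apply/matrixP => i j; rewrite !mxE conjCK. Qed.

Lemma adj_cj m n (A : 'M[C]_(m,n)) : adjmx (cj A) = cj (adjmx A).
Proof. by rewrite /adjmx /cj map_trmx. Qed.

Lemma bf_cj m n (M : 'M[C]_(m,n)) u w : bf (cj M) u w = (bf M (cj u) (cj w))^*.
Proof.
have e (x : 'M[C]_1) : (x 0 0)^* = (cj x) 0 0 by rewrite mxE.
have mulcj p q r (A : 'M[C]_(p,q)) (B : 'M[C]_(q,r)) : cj (A *m B) = cj A *m cj B.
  exact: map_mxM.
rewrite /bf e !mulcj -adj_cj !cjK.
done.
Qed.

Lemma psd_cj n (M : 'M[C]_n) : psdmx M -> psdmx (cj M).
Proof.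
move=> pM; apply: psdP => [|v]; first by rewrite adj_cj psd_herm.
by rewrite bf_cj conjC_ge0; exact: psd_qf.
Qed.

Lemma feas_cj n (P G : 'M[C]_n) : adjmx P = P ->
  gm_feasible P P^T G -> gm_feasible P P^T (cj G).
Proof.
move=> hP; have hPT : adjmx P^T = P^T.
  by apply/matrixP => i j; rewrite -{2}hP !mxE.
have cP : cj P = P^T by apply/matrixP => i j; rewrite -{1}hP !mxE conjCK.
have cPT : cj P^T = P by rewrite -cP cjK.
move=> /(feasE _ hP hPT) [pG h]; apply/(feasE _ hP hPT); split; first exact: psd_cj.
move=> u w; have := h (cj w) (cj u); rewrite -conjC_ge0 /Phi !rmorphD /=.
rewrite -[X in bf X u u]cPT -[X in bf X w w]cP !bf_cj.
set a := (bf P^T _ _)^*; set b := (bf G (cj u) (cj w))^*.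
set c := (bf G (cj w) (cj u))^*; set d := (bf P _ _)^*.
by rewrite (addrC _ a) -!addrA (addrC d) !addrA (addrAC a).
Qed.

End Basic.


Lemma gmean_spec (C : numClosedFieldType) n (P Q : 'M[C]_n) :
  psdmx P -> psdmx Q -> ismax P Q (gmean P Q).
Proof.
move=> pP pQ; rewrite /gmean; apply: epsilon_spec; exact: gm_exists.
Qed.

Theorem lemma11 (C : numClosedFieldType) (n d : nat) (rho : 'M[C]_n)
  (X : 'I_d -> 'M[C]_n) :
  density rho ->
  (forall k, herm_mx (X k)) ->
  let A := \matrix_(i < d, j < d)
             \tr (psd_sqrt rho *m X j *m psd_sqrt rho *m X i) in
  let J := \matrix_(i < d, j < d) \tr (rho *m X j *m X i) in
  [/\ real_mx A, real_mx (gmean J J^T) & loewner_le A (gmean J J^T)].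
Proof.
move=> [prho _] hX A J.
have [pS eS] : psdmx (psd_sqrt rho) /\ psd_sqrt rho *m psd_sqrt rho = rho.
  exact: (epsilon_spec (inhabits (0 : 'M[C]_n)) (fun S => psdmx S /\ S *m S = rho) (sqrt_exists prho)).
set S := psd_sqrt rho in pS eS.
have eA : A = KK X S S by [].
have eJ : J = KK X (S *m S) 1%:M.
  by apply/matrixP => i j; rewrite !mxE eS mulmx1.
have eJT : J^T = KK X 1%:M (S *m S).
  apply/matrixP => i j; rewrite !mxE eS mul1mx.
  by rewrite [LHS]trC3 mulmxA.
have pJ : psdmx J by rewrite eJ; exact: J_psd.
have pJT : psdmx J^T by rewrite eJT; exact: JT_psd.
have [fG mG] := gmean_spec pJ pJT.
set G := gmean J J^T in fG mG *.
split.
- by rewrite eA; apply: A_real => //; exact: psd_herm.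
- have hJ := psd_herm pJ.
  have le1 : loewner_le (cj G) G by apply: mG; exact: feas_cj.
  have le2 : psdmx (cj G - G).
    have := psd_cj le1; rewrite /loewner_le.
    have -> : cj (G - cj G) = cj G - G.
      by apply/matrixP => i j; rewrite !mxE rmorphB /= conjCK.
    done.
  have eG : G - cj G = 0 by apply: psd_antisym => //; rewrite opprB.
  move=> i j; apply/CrealP.
  have := congr1 (fun M : 'M_d => M i j) eG; rewrite !mxE /= => /eqP.
  by rewrite subr_eq0 => /eqP <-.
- by apply: mG; rewrite eA eJT eJ; apply: A_feas.
Qed.
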